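(* Let $P$ be an irreducible transition matrix on a finite set $G$ with $|G|\ge2$, reversible with respect to the probability measure $\pi$. Then for every $S\subset G$ and every $x\in S$, $$h_S(x)\le u(P)^{-1}\,\pi(x)\,\mathbb E_x[T_S^+].$$
   Context: $(X_t)$ is the chain with transition matrix $P$. For $A\subset G$, $T_A=\inf\{t\ge0:X_t\in A\}$ and $T_A^+=\inf\{t\ge1:X_t\in A\}$. $\Pr_z,\mathbb E_z$ refer to the chain started at $z$. $u(P):=\min_{x\neq y}\Pr_x[T_y<T_x^+]$. The harmonic measure on $S$ from $y$ is $h_{y,S}(x)=\Pr_y[X_{T_S}=x]$, and the harmonic measure from stationarity is $h_S(x)=\sum_{y\in G}\pi(y)h_{y,S}(x)$. *)

(* Defs.v *)
(* classical reals. States of G are 0 .. n-1 (|G| = n). *)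
From Stdlib Require Import Reals Lra ClassicalEpsilon.
Open Scope R_scope.

Fixpoint rsum (n : nat) (f : nat -> R) : R :=
  match n with O => 0 | S m => rsum m f + f m end.

(* The limit of a sequence (chosen by classical choice; meaningful when it converges). *)
Definition Rlim (u : nat -> R) : R :=
  epsilon (inhabits 0) (fun l => Un_cv u l).

Definition indic (b : bool) : R := if b then 1 else 0.

Fixpoint Ppow (n : nat) (P : nat -> nat -> R) (t : nat) (i j : nat) : R :=
  match t with
  | O => if Nat.eqb i j then 1 else 0
  | S t' => rsum n (fun k => Ppow n P t' i k * P k j)
  end.

Definition stochastic (n : nat) (P : nat -> nat -> R) : Prop :=
  (forall i j, (i < n)%nat -> (j < n)%nat -> 0 <= P i j) /\
  (forall i, (i < n)%nat -> rsum n (fun j => P i j) = 1).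

Definition irreducible (n : nat) (P : nat -> nat -> R) : Prop :=
  forall i j, (i < n)%nat -> (j < n)%nat -> exists t, 0 < Ppow n P t i j.

Definition prob_measure (n : nat) (pi : nat -> R) : Prop :=
  (forall i, (i < n)%nat -> 0 <= pi i) /\ rsum n pi = 1.

Definition reversible (n : nat) (P : nat -> nat -> R) (pi : nat -> R) : Prop :=
  forall i j, (i < n)%nat -> (j < n)%nat -> pi i * P i j = pi j * P j i.

(* hitk n P A x k z = Pr_z[ T_A <= k and X_{T_A} = x ]  (T_A = inf{t >= 0 : X_t in A}) *)
Fixpoint hitk (n : nat) (P : nat -> nat -> R) (A : nat -> bool) (x : nat)
  (k : nat) (z : nat) : R :=
  if A z then (if Nat.eqb z x then 1 else 0)
  else match k with
       | O => 0
       | S k' => rsum n (fun w => P z w * hitk n P A x k' w)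
       end.

(* harmonic measure from y: h_{y,A}(x) = Pr_y[X_{T_A} = x] *)
Definition harm_from (n : nat) (P : nat -> nat -> R) (A : nat -> bool) (y x : nat) : R :=
  Rlim (fun k => hitk n P A x k y).

Definition harm (n : nat) (P : nat -> nat -> R) (pi : nat -> R) (A : nat -> bool) (x : nat) : R :=
  rsum n (fun y => pi y * harm_from n P A y x).

(* escape n P x y k z = Pr_z[ T_y <= k and T_y < T_x ] *)
Fixpoint escape (n : nat) (P : nat -> nat -> R) (x y : nat) (k : nat) (z : nat) : R :=
  if Nat.eqb z y then 1
  else if Nat.eqb z x then 0
  else match k with
       | O => 0
       | S k' => rsum n (fun w => P z w * escape n P x y k' w)
       end.

(* Pr_x[ T_y < T_x^+ ] (first step, then the chain from X_1 must reach y before x) *)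
Definition escape_prob (n : nat) (P : nat -> nat -> R) (x y : nat) : R :=
  Rlim (fun k => rsum n (fun w => P x w * escape n P x y k w)).

Definition uP (n : nat) (P : nat -> nat -> R) : R :=
  epsilon (inhabits 0) (fun u =>
    (exists x y, (x < n)%nat /\ (y < n)%nat /\ x <> y /\ u = escape_prob n P x y) /\
    (forall x y, (x < n)%nat -> (y < n)%nat -> x <> y -> u <= escape_prob n P x y)).

(* firsthit n P A m w = Pr_w[ T_A = m ] *)
Fixpoint firsthit (n : nat) (P : nat -> nat -> R) (A : nat -> bool) (m : nat) (w : nat) : R :=
  match m with
  | O => indic (A w)
  | S m' => indic (negb (A w)) * rsum n (fun v => P w v * firsthit n P A m' v)
  end.

(* Pr_x[ T_A^+ = t ]  for t >= 1  (T_A^+ = inf{t >= 1 : X_t in A}) *)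
Definition ret_prob (n : nat) (P : nat -> nat -> R) (A : nat -> bool) (x : nat) (t : nat) : R :=
  match t with
  | O => 0
  | S m => rsum n (fun w => P x w * firsthit n P A m w)
  end.

Definition exp_ret (n : nat) (P : nat -> nat -> R) (A : nat -> bool) (x : nat) : R :=
  Rlim (fun N => rsum N (fun t => INR t * ret_prob n P A x t)).

(* Main.v *)
Require Import Defs.
From Stdlib Require Import Reals Lra Lia ClassicalEpsilon Classical.
Open Scope R_scope.

Lemma rsum_ext : forall m f g, (forall i, (i < m)%nat -> f i = g i) -> rsum m f = rsum m g.
Proof. induction m; intros f g H; simpl; auto. rewrite (IHm f g) by (intros; apply H; lia). rewrite H by lia. auto. Qed.

Lemma rsum_le : forall m f g, (forall i, (i < m)%nat -> f i <= g i) -> rsum m f <= rsum m g.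
Proof. induction m; intros f g H; simpl. lra. specialize (IHm f g (fun i Hi => H i ltac:(lia))). specialize (H m ltac:(lia)). lra. Qed.

Lemma rsum_nonneg : forall m f, (forall i, (i < m)%nat -> 0 <= f i) -> 0 <= rsum m f.
Proof. intros. replace 0 with (rsum m (fun _ => 0)). apply rsum_le; auto. clear; induction m; simpl; lra. Qed.

Lemma rsum_plus : forall m f g, rsum m (fun i => f i + g i) = rsum m f + rsum m g.
Proof. induction m; intros; simpl; try rewrite IHm; lra. Qed.

Lemma rsum_minus : forall m f g, rsum m (fun i => f i - g i) = rsum m f - rsum m g.
Proof. induction m; intros; simpl; try rewrite IHm; lra. Qed.

Lemma rsum_scal : forall m c f, rsum m (fun i => c * f i) = c * rsum m f.
Proof. induction m; intros; simpl; try rewrite IHm; lra. Qed.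

Lemma rsum_const : forall m c, rsum m (fun _ => c) = INR m * c.
Proof. induction m; intros; simpl rsum; try rewrite IHm. simpl; lra. rewrite S_INR. lra. Qed.

Lemma rsum_swap : forall m k (F : nat -> nat -> R),
  rsum m (fun i => rsum k (fun j => F i j)) = rsum k (fun j => rsum m (fun i => F i j)).
Proof. induction m; intros; simpl. clear; induction k; simpl; lra.
  rewrite IHm. rewrite <- rsum_plus. auto. Qed.

Lemma rsum_zero : forall m, rsum m (fun _ => 0) = 0.
Proof. induction m; simpl; try rewrite IHm; lra. Qed.

Lemma rsum_delta : forall m x f, (x < m)%nat ->
  rsum m (fun i => (if Nat.eqb i x then 1 else 0) * f i) = f x.
Proof. induction m; intros x f H. lia. cbn [rsum]. destruct (Nat.eq_dec x m).
  - subst. rewrite Nat.eqb_refl. rewrite (rsum_ext _ _ (fun _ => 0)). rewrite rsum_zero. lra.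
    intros. replace (Nat.eqb i m) with false. lra. symmetry; apply Nat.eqb_neq; lia.
  - replace (Nat.eqb m x) with false by (symmetry; apply Nat.eqb_neq; lia). rewrite IHm by lia. lra.
Qed.

Lemma rsum_pos_exists : forall m f, 0 < rsum m f -> exists i, (i < m)%nat /\ 0 < f i.
Proof. induction m; intros f H; simpl in *. lra.
  destruct (Rlt_dec 0 (f m)). exists m; split; auto.
  destruct (IHm f) as [i [Hi Hf]]. lra. exists i; split; auto. Qed.

Lemma rsum_zero_each : forall m f, (forall i, (i < m)%nat -> 0 <= f i) -> rsum m f <= 0 ->
  forall i, (i < m)%nat -> f i = 0.
Proof. induction m; intros f Hn H i Hi; simpl in *. lia.
  assert (0 <= rsum m f) by (apply rsum_nonneg; intros; apply Hn; lia).
  assert (0 <= f m) by (apply Hn; lia).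
  destruct (Nat.eq_dec i m). subst; lra. apply IHm; auto. lra. lia. Qed.

Lemma rsum_split : forall a b f, rsum (a + b) f = rsum a f + rsum b (fun s => f (a + s)%nat).
Proof. intros a b; induction b; intros; simpl. rewrite Nat.add_0_r; lra.
  rewrite Nat.add_succ_r. simpl. rewrite IHb. lra. Qed.

Lemma rsum_shift : forall K f, rsum (Datatypes.S K) f = f O + rsum K (fun t => f (Datatypes.S t)).
Proof. intros. replace (Datatypes.S K) with (1 + K)%nat by lia. rewrite rsum_split. simpl. lra. Qed.

Section Main.
Variable n : nat.
Variable P : nat -> nat -> R.
Hypothesis HP0 : forall i j, (i < n)%nat -> (j < n)%nat -> 0 <= P i j.
Hypothesis HP1 : forall i, (i < n)%nat -> rsum n (fun j => P i j) = 1.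
Variable A : nat -> bool.

Lemma indic_01 : forall b, 0 <= indic b <= 1.
Proof. destruct b; simpl; lra. Qed.

Definition Qop (f : nat -> R) (w : nat) : R :=
  rsum n (fun y => P w y * indic (negb (A y)) * f y).

Fixpoint iterQ (t : nat) (f : nat -> R) : nat -> R :=
  match t with O => f | Datatypes.S t' => Qop (iterQ t' f) end.

Lemma Qop_ext : forall f g w, (forall y, (y < n)%nat -> f y = g y) -> Qop f w = Qop g w.
Proof. intros; unfold Qop; apply rsum_ext; intros; rewrite H; auto. Qed.

Lemma iterQ_add : forall a b f w, iterQ (a + b) f w = iterQ a (iterQ b f) w.
Proof. induction a; intros; simpl; auto. apply Qop_ext; intros; auto. Qed.

Lemma iterQ_mono : forall t f g, (forall y, (y < n)%nat -> f y <= g y) ->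
  forall w, (w < n)%nat -> iterQ t f w <= iterQ t g w.
Proof. induction t; intros f g H w Hw; simpl; auto. unfold Qop. apply rsum_le; intros.
  assert (0 <= P w i * indic (negb (A i))) by (apply Rmult_le_pos; [apply HP0; auto| apply indic_01]).
  apply Rmult_le_compat_l; auto. Qed.

Lemma iterQ_scal : forall t c f w, iterQ t (fun y => c * f y) w = c * iterQ t f w.
Proof. induction t; intros; simpl; auto. unfold Qop. rewrite <- rsum_scal. apply rsum_ext; intros.
  rewrite IHt. ring. Qed.

Lemma iterQ_nonneg : forall t f, (forall y, (y < n)%nat -> 0 <= f y) ->
  forall w, (w < n)%nat -> 0 <= iterQ t f w.
Proof. intros. replace 0 with (iterQ t (fun _ => 0 * 1) w). apply iterQ_mono; auto. intros; rewrite Rmult_0_l; auto.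
  rewrite (iterQ_scal t 0 (fun _ => 1)). ring. Qed.

Lemma Qop_le1 : forall f w, (w < n)%nat -> (forall y, (y < n)%nat -> 0 <= f y <= 1) -> Qop f w <= 1.
Proof. intros. rewrite <- (HP1 w H). unfold Qop. apply rsum_le; intros.
  pose proof (HP0 w i H H1). pose proof (indic_01 (negb (A i))). specialize (H0 i H1).
  rewrite Rmult_assoc. rewrite <- (Rmult_1_r (P w i)) at 2. apply Rmult_le_compat_l; auto.
  replace 1 with (1*1) by ring. apply Rmult_le_compat; lra. Qed.

Definition D (t : nat) : nat -> R := iterQ t (fun _ => 1).

Lemma D_bounds : forall t w, (w < n)%nat -> 0 <= D t w <= 1.
Proof. induction t; intros; unfold D in *; simpl. lra. split.
  apply (iterQ_nonneg (Datatypes.S t)); auto; intros; lra.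
  apply Qop_le1; auto. Qed.

Lemma D_decr : forall t w, (w < n)%nat -> D (Datatypes.S t) w <= D t w.
Proof. intros. unfold D. replace (Datatypes.S t) with (t + 1)%nat by lia. rewrite iterQ_add.
  apply iterQ_mono; auto. intros. apply (D_bounds 1); auto. Qed.

Lemma D_mono : forall t t' w, (t <= t')%nat -> (w < n)%nat -> D t' w <= D t w.
Proof. intros t t' w H Hw. induction H. lra. pose proof (D_decr m w Hw). lra. Qed.

Variable pi : nat -> R.
Hypothesis Hrev : forall i j, (i < n)%nat -> (j < n)%nat -> pi i * P i j = pi j * P j i.
Variable x : nat.
Hypothesis Hx : (x < n)%nat.
Hypothesis HAx : A x = true.

Lemma hitk_0 : forall y, hitk n P A x 0 y = if Nat.eqb y x then 1 else 0.
Proof. intros; simpl. destruct (A y) eqn:E; auto. destruct (Nat.eqb_spec y x); auto. subst; congruence. Qed.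

Lemma hitk_S : forall k y, hitk n P A x (Datatypes.S k) y =
  (if Nat.eqb y x then 1 else 0) + indic (negb (A y)) * rsum n (fun w => P y w * hitk n P A x k w).
Proof. intros. cbn [hitk]. destruct (A y) eqn:E; simpl. lra.
  destruct (Nat.eqb_spec y x). subst; congruence. lra. Qed.

Lemma adjoint : forall g f, rsum n (fun y => pi y * g y * (indic (negb (A y)) * rsum n (fun w => P y w * f w)))
  = rsum n (fun w => pi w * f w * Qop g w).
Proof. intros. unfold Qop.
  rewrite (rsum_ext _ _ (fun y => rsum n (fun w => pi y * g y * indic (negb (A y)) * P y w * f w))).
  2:{ intros. rewrite <- rsum_scal. rewrite <- rsum_scal. apply rsum_ext; intros. ring. }
  rewrite (rsum_ext _ (fun w => pi w * f w * _) (fun w => rsum n (fun y => pi w * f w * P w y * indic (negb (A y)) * g y))).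
  2:{ intros. rewrite <- rsum_scal. apply rsum_ext; intros. ring. }
  rewrite rsum_swap. apply rsum_ext; intros w Hw. apply rsum_ext; intros y Hy.
  pose proof (Hrev y w Hy Hw). 
  replace (pi y * g y * indic (negb (A y)) * P y w * f w) with ((pi y * P y w) * (g y * indic (negb (A y)) * f w)) by ring.
  rewrite H. ring. Qed.

Lemma reversal : forall k g, rsum n (fun y => pi y * g y * hitk n P A x k y) =
  pi x * rsum (Datatypes.S k) (fun t => iterQ t g x).
Proof. induction k; intros g.
  - rewrite (rsum_ext _ _ (fun y => (if Nat.eqb y x then 1 else 0) * (pi y * g y))).
    2:{ intros. rewrite hitk_0. ring. } rewrite rsum_delta; auto. simpl. ring.
  - rewrite (rsum_ext _ _ (fun y => (if Nat.eqb y x then 1 else 0) * (pi y * g y) +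
       pi y * g y * (indic (negb (A y)) * rsum n (fun w => P y w * hitk n P A x k w)))).
    2:{ intros. rewrite hitk_S. ring. }
    rewrite rsum_plus. rewrite rsum_delta; auto. rewrite adjoint.
    rewrite (rsum_ext _ _ (fun w => pi w * Qop g w * hitk n P A x k w)) by (intros; ring).
    rewrite IHk. rewrite (rsum_shift (Datatypes.S k)).
    rewrite (rsum_ext _ (fun t => iterQ (Datatypes.S t) g x) (fun t => iterQ t (Qop g) x)). simpl. ring.
    intros. replace (Datatypes.S i) with (i + 1)%nat by lia. rewrite iterQ_add. reflexivity.
Qed.

Lemma firsthit_D : forall m w, (w < n)%nat ->
  rsum n (fun v => P w v * firsthit n P A m v) = D m w - D (Datatypes.S m) w.
Proof. induction m; intros w Hw.
  - unfold D; simpl. unfold Qop.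
    rewrite (rsum_ext _ _ (fun v => P w v - P w v * indic (negb (A v)) * 1)).
    rewrite rsum_minus, HP1 by auto. ring.
    intros. destruct (A i); simpl; ring.
  - unfold D. cbn [iterQ]. fold (D m). fold (D (Datatypes.S m)).
    change (iterQ (Datatypes.S m) (fun _ => 1)) with (D (Datatypes.S m)).
    unfold Qop. rewrite <- rsum_minus. apply rsum_ext; intros v Hv. cbn [firsthit].
    rewrite IHm by auto. change (D (Datatypes.S m) v) with (Qop (D m) v). unfold Qop. ring.
Qed.

Lemma ret_D : forall t, ret_prob n P A x (Datatypes.S t) = D t x - D (Datatypes.S t) x.
Proof. intros. unfold ret_prob. apply firsthit_D; auto. Qed.

Lemma exp_partial : forall N, rsum (Datatypes.S N) (fun t => INR t * ret_prob n P A x t) =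
  rsum N (fun t => D t x) - INR N * D N x.
Proof. induction N. simpl. ring. cbn [rsum] in *. rewrite IHN. rewrite ret_D. rewrite S_INR. ring. Qed.

Lemma Ppow_nonneg : forall t i j, (i < n)%nat -> (j < n)%nat -> 0 <= Ppow n P t i j.
Proof. induction t; intros; simpl. destruct (Nat.eqb i j); lra.
  apply rsum_nonneg; intros. apply Rmult_le_pos; auto. Qed.

Lemma prod_pos_split : forall a b, 0 <= a -> 0 <= b -> 0 < a * b -> 0 < a /\ 0 < b.
Proof. intros. destruct (Rle_lt_or_eq_dec 0 a H); destruct (Rle_lt_or_eq_dec 0 b H0); subst; try lra.
  Qed.

Lemma closed_reach : forall (F : nat -> Prop) z, (z < n)%nat -> F z ->
  (forall w v, (w < n)%nat -> (v < n)%nat -> F w -> 0 < P w v -> F v) ->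
  forall t j, (j < n)%nat -> 0 < Ppow n P t z j -> F j.
Proof. intros F z Hz Fz Hcl. induction t; intros j Hj Hp; simpl in Hp.
  - destruct (Nat.eqb_spec z j). subst; auto. lra.
  - destruct (rsum_pos_exists _ _ Hp) as [k [Hk Hpk]].
    destruct (prod_pos_split _ _ (Ppow_nonneg t z k Hz Hk) (HP0 k j Hk Hj) Hpk).
    apply (Hcl k j); auto. Qed.

Lemma Ppow_0_pos : forall i j, 0 < Ppow n P 0 i j -> i = j.
Proof. intros. simpl in H. destruct (Nat.eqb_spec i j); auto; lra. Qed.

Lemma Ppow_S_pos : forall t i j, (i < n)%nat -> (j < n)%nat -> 0 < Ppow n P (Datatypes.S t) i j ->
  exists k, (k < n)%nat /\ 0 < Ppow n P t i k /\ 0 < P k j.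
Proof. intros. simpl in H1. destruct (rsum_pos_exists _ _ H1) as [k [Hk Hpk]].
  destruct (prod_pos_split _ _ (Ppow_nonneg t i k H Hk) (HP0 k j Hk H0) Hpk). eauto. Qed.

Lemma sum_one_each : forall w a, (w < n)%nat -> (forall y, (y < n)%nat -> a y <= 1) ->
  rsum n (fun y => P w y * a y) = 1 -> forall v, (v < n)%nat -> 0 < P w v -> a v = 1.
Proof. intros w a Hw Ha Hs v Hv Hp.
  assert (forall y, (y < n)%nat -> P w y * (1 - a y) = 0).
  { apply rsum_zero_each. intros. apply Rmult_le_pos. auto. specialize (Ha i H); lra.
    rewrite (rsum_ext _ _ (fun y => P w y - P w y * a y)) by (intros; ring). rewrite rsum_minus, HP1, Hs; auto; lra. }
  specialize (H v Hv). destruct (Rmult_integral _ _ H); lra. Qed.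

Hypothesis Hirr : irreducible n P.
Hypothesis Hn : (2 <= n)%nat.

Lemma D_closure : forall w v, (w < n)%nat -> (v < n)%nat -> (forall t, D t w = 1) -> 0 < P w v ->
  A v = false /\ (forall t, D t v = 1).
Proof. intros w v Hw Hv Hf Hp.
  assert (forall t, indic (negb (A v)) * D t v = 1).
  { intros t. apply (sum_one_each w (fun y => indic (negb (A y)) * D t y)); auto.
    intros. pose proof (indic_01 (negb (A y))). pose proof (D_bounds t y H).
    replace 1 with (1*1) by ring. apply Rmult_le_compat; lra.
    rewrite <- (Hf (Datatypes.S t)). change (D (Datatypes.S t) w) with (Qop (D t) w). unfold Qop.
    apply rsum_ext; intros; ring. }
  split. pose proof (H 0%nat). destruct (A v); simpl in *; auto. lra.
  intros t. specialize (H t). destruct (A v); simpl in *; lra. Qed.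

Lemma D_lt1 : forall z, (z < n)%nat -> exists t, D t z < 1.
Proof. intros z Hz. apply NNPP. intro Hc.
  assert (Fz : forall t, D t z = 1). { intro t. pose proof (D_bounds t z Hz). destruct (Rlt_dec (D t z) 1). exfalso; eauto. lra. }
  assert (Hcl : forall w v, (w < n)%nat -> (v < n)%nat -> (forall t, D t w = 1) -> 0 < P w v -> forall t, D t v = 1).
  { intros w v Hw Hv Hf Hp. exact (proj2 (D_closure w v Hw Hv Hf Hp)). }
  destruct (Hirr z x Hz Hx) as [t1 H1].
  pose proof (closed_reach (fun w => forall t, D t w = 1) z Hz Fz Hcl t1 x Hx H1) as Fx.
  set (y := if Nat.eqb x 0 then 1%nat else 0%nat).
  assert (Hy : (y < n)%nat /\ y <> x). { unfold y; destruct (Nat.eqb_spec x 0); lia. }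
  destruct Hy as [Hy Hyx].
  destruct (Hirr x y Hx Hy) as [t2 H2].
  pose proof (closed_reach (fun w => forall t, D t w = 1) x Hx Fx Hcl t2 y Hy H2) as Fy.
  destruct (Hirr y x Hy Hx) as [t3 H3]. destruct t3. apply Ppow_0_pos in H3. congruence.
  destruct (Ppow_S_pos _ _ _ Hy Hx H3) as [k [Hk [Hk1 Hk2]]].
  pose proof (closed_reach (fun w => forall t, D t w = 1) y Hy Fy Hcl t3 k Hk Hk1) as Fk.
  destruct (D_closure k x Hk Hx Fk Hk2). congruence. Qed.

Lemma D_unif : forall N, (N <= n)%nat -> exists m, forall z, (z < N)%nat -> D m z < 1.
Proof. induction N; intros. exists O; intros; lia.
  destruct (IHN ltac:(lia)) as [m Hm]. destruct (D_lt1 N ltac:(lia)) as [t Ht].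
  exists (Nat.max m t). intros z Hz. destruct (Nat.eq_dec z N).
  subst. pose proof (D_mono t (Nat.max m t) N ltac:(lia) ltac:(lia)). lra.
  pose proof (D_mono m (Nat.max m t) z ltac:(lia) ltac:(lia)). specialize (Hm z ltac:(lia)). lra. Qed.

Lemma rho_exists : forall m N, (forall z, (z < N)%nat -> D m z < 1) ->
  exists rho, 0 <= rho < 1 /\ forall z, (z < N)%nat -> D m z <= rho.
Proof. intros m; induction N; intros H. exists 0; split; [lra| intros; lia].
  destruct IHN as [r [Hr Hz]]. intros; apply H; lia.
  exists (Rmax r (D m N)). split. split. apply Rle_trans with r; [lra|apply Rmax_l].
  apply Rmax_lub_lt; auto; lra.
  intros z Hzz. destruct (Nat.eq_dec z N). subst; apply Rmax_r. apply Rle_trans with r. apply Hz; lia. apply Rmax_l. Qed.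

Lemma D_geom : exists m rho, (1 <= m)%nat /\ 0 <= rho < 1 /\
  forall K w, (w < n)%nat -> D (K * m) w <= rho ^ K.
Proof. destruct (D_unif n (le_n n)) as [m0 Hm0].
  set (m := Datatypes.S m0).
  assert (Hm : forall z, (z < n)%nat -> D m z < 1).
  { intros. pose proof (D_mono m0 m z ltac:(unfold m; lia) H). specialize (Hm0 z H). lra. }
  destruct (rho_exists m n Hm) as [rho [Hr Hz]].
  exists m, rho. split. unfold m; lia. split; auto.
  induction K; intros w Hw. simpl. pose proof (D_bounds 0 w Hw). lra.
  replace (Datatypes.S K * m)%nat with (K * m + m)%nat by lia. unfold D. rewrite iterQ_add.
  apply Rle_trans with (iterQ (K * m) (fun _ => rho * 1) w).
  apply iterQ_mono; auto. intros; rewrite Rmult_1_r; apply Hz; auto.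
  rewrite iterQ_scal. fold (D (K*m)). simpl. apply Rmult_le_compat_l. lra. apply IHK; auto. Qed.

End Main.

Lemma mono_cv : forall u M, (forall k, u k <= u (Datatypes.S k)) -> (forall k, u k <= M) -> exists l, Un_cv u l.
Proof. intros. destruct (growing_cv u H) as [l Hl]. exists M. intros y [i Hi]. subst; auto. eauto. Qed.

Lemma decr_mono : forall d : nat -> R, (forall t, d (Datatypes.S t) <= d t) -> forall a b, (a <= b)%nat -> d b <= d a.
Proof. intros d H a b Hab. induction Hab. lra. specialize (H m). lra. Qed.

Lemma rsum_len_mono : forall d : nat -> R, (forall t, 0 <= d t) -> forall a b, (a <= b)%nat -> rsum a d <= rsum b d.
Proof. intros. replace b with (a + (b - a))%nat by lia. rewrite rsum_split.
  pose proof (rsum_nonneg (b - a) (fun s => d (a + s)%nat) (fun i _ => H (a + i)%nat)). lra. Qed.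

Lemma block_bound : forall (d : nat -> R) m rho, (1 <= m)%nat -> 0 <= rho < 1 ->
  (forall t, 0 <= d t) -> (forall t, d (Datatypes.S t) <= d t) -> (forall K, d (K * m)%nat <= rho ^ K) ->
  forall N, rsum N d <= INR m / (1 - rho).
Proof. intros d m rho Hm Hr Hn Hd HK.
  assert (HB : forall K, rsum (K * m) d <= INR m * (1 - rho ^ K) / (1 - rho)).
  { induction K. simpl. replace (1 - 1) with 0 by ring. unfold Rdiv. rewrite Rmult_0_r, Rmult_0_l. lra.
    replace (Datatypes.S K * m)%nat with (K * m + m)%nat by lia. rewrite rsum_split.
    assert (rsum m (fun s => d (K * m + s)%nat) <= INR m * rho ^ K).
    { rewrite <- rsum_const. apply rsum_le. intros. apply Rle_trans with (d (K*m)%nat).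
      apply decr_mono; auto; lia. auto. }
    apply Rle_trans with (INR m * (1 - rho ^ K) / (1 - rho) + INR m * rho ^ K). lra.
    right. simpl. field. lra. }
  intros N. apply Rle_trans with (rsum (N * m) d). apply rsum_len_mono; auto; nia.
  apply Rle_trans with (INR m * (1 - rho ^ N) / (1 - rho)); auto.
  unfold Rdiv. apply Rmult_le_compat_r. apply Rlt_le, Rinv_0_lt_compat; lra.
  pose proof (pow_le rho N ltac:(lra)). pose proof (pos_INR m). nra. Qed.

Lemma ND_to_0 : forall (d : nat -> R) L, (forall t, 0 <= d t) -> (forall t, d (Datatypes.S t) <= d t) ->
  Un_cv (fun N => rsum N d) L -> Un_cv (fun N => INR N * d N) 0.
Proof. intros d L Hn Hd Hc. pose proof (CV_Cauchy _ (exist _ L Hc)) as Hca.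
  intros eps He. destruct (Hca (eps / 3) ltac:(lra)) as [N0 HN0].
  exists (2 * N0 + 2)%nat. intros N HN. set (M := (N / 2)%nat). pose proof (Nat.div_mod N 2 ltac:(lia)). pose proof (Nat.mod_upper_bound N 2 ltac:(lia)). fold M in H, H0.
  assert (HM1 : (N0 <= M)%nat) by (unfold M; lia). assert (HM2 : (M <= N)%nat) by (unfold M; lia).
  assert (HM3 : (N <= 3 * M)%nat) by (unfold M; lia). assert (HM4 : (M <= N - M)%nat) by (unfold M; lia).
  specialize (HN0 N M ltac:(lia) ltac:(lia)). unfold Rdist in HN0.
  replace N with (M + (N - M))%nat in HN0 at 1 by lia. rewrite rsum_split in HN0.
  assert (rsum (N - M) (fun s => d (M + s)%nat) >= INR (N - M) * d N).
  { rewrite <- rsum_const. apply Rle_ge, rsum_le. intros. apply decr_mono; auto; lia. }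
  assert (0 <= rsum (N - M) (fun s => d (M + s)%nat)) by (apply rsum_nonneg; auto).
  rewrite Rplus_comm in HN0. unfold Rminus in HN0. rewrite Rplus_assoc, Rplus_opp_r, Rplus_0_r in HN0.
  rewrite Rabs_right in HN0 by lra.
  apply le_INR in HM3. apply le_INR in HM4. rewrite mult_INR in HM3. simpl INR in HM3.
  pose proof (Hn N). pose proof (pos_INR N).
  unfold Rdist. rewrite Rminus_0_r. rewrite Rabs_right by nra. nra. Qed.

Section Esc.
Variable n : nat.
Variable P : nat -> nat -> R.
Hypothesis HP0 : forall i j, (i < n)%nat -> (j < n)%nat -> 0 <= P i j.
Hypothesis HP1 : forall i, (i < n)%nat -> rsum n (fun j => P i j) = 1.
Hypothesis Hirr : irreducible n P.
Hypothesis Hn : (2 <= n)%nat.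

Lemma esc_bounds : forall a b k z, (z < n)%nat -> 0 <= escape n P a b k z <= 1.
Proof. intros a b; induction k; intros z Hz; simpl.
  destruct (Nat.eqb z b); [lra|]. destruct (Nat.eqb z a); lra.
  destruct (Nat.eqb z b); [lra|]. destruct (Nat.eqb z a); [lra|]. split.
  apply rsum_nonneg; intros. apply Rmult_le_pos; auto. apply IHk; auto.
  rewrite <- (HP1 z Hz). apply rsum_le; intros. pose proof (HP0 z i Hz H). specialize (IHk i H).
  rewrite <- (Rmult_1_r (P z i)) at 2. apply Rmult_le_compat_l; lra. Qed.

Lemma esc_mono : forall a b k z, (z < n)%nat -> escape n P a b k z <= escape n P a b (Datatypes.S k) z.
Proof. intros a b; induction k; intros z Hz.
  cbn [escape]. destruct (Nat.eqb z b); [lra|]. destruct (Nat.eqb z a); [lra|].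
  apply rsum_nonneg; intros. apply Rmult_le_pos; auto. exact (proj1 (esc_bounds a b O i H)).
  cbn [escape] in *. destruct (Nat.eqb z b); [lra|]. destruct (Nat.eqb z a); [lra|].
  apply rsum_le; intros. apply Rmult_le_compat_l; auto. Qed.

Definition sig_esc a b k := rsum n (fun w => P a w * escape n P a b k w).

Lemma sig_bounds : forall a b k, (a < n)%nat -> 0 <= sig_esc a b k <= 1.
Proof. intros. unfold sig_esc. split. apply rsum_nonneg; intros. apply Rmult_le_pos; auto. apply esc_bounds; auto.
  rewrite <- (HP1 a H). apply rsum_le; intros. pose proof (HP0 a i H H0). pose proof (esc_bounds a b k i H0).
  rewrite <- (Rmult_1_r (P a i)) at 2. apply Rmult_le_compat_l; lra. Qed.

Lemma sig_pos : forall a b, (a < n)%nat -> (b < n)%nat -> a <> b -> exists k, 0 < sig_esc a b k.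
Proof. intros a b Ha Hb Hab. apply NNPP; intro Hc.
  assert (Hs : forall k, sig_esc a b k <= 0). { intros k. destruct (Rle_dec (sig_esc a b k) 0); auto. exfalso; apply Hc. exists k; lra. }
  set (F := fun w => forall k, escape n P a b k w = 0).
  assert (Fa : F a). { intros k; destruct k; simpl; destruct (Nat.eqb_spec a b); try congruence; rewrite Nat.eqb_refl; auto. }
  assert (Hcl : forall w v, (w < n)%nat -> (v < n)%nat -> F w -> 0 < P w v -> F v).
  { intros w v Hw Hv Fw Hp k.
    assert (Hz : forall u, (u < n)%nat -> P w u * escape n P a b k u = 0).
    { apply rsum_zero_each. intros; apply Rmult_le_pos; auto; apply esc_bounds; auto.
      destruct (Nat.eq_dec w a). subst. apply Hs.
      specialize (Fw (Datatypes.S k)). simpl in Fw. destruct (Nat.eqb_spec w b).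
      subst. lra. destruct (Nat.eqb_spec w a). congruence. lra. }
    specialize (Hz v Hv). destruct (Rmult_integral _ _ Hz); lra. }
  destruct (Hirr a b Ha Hb) as [t Ht].
  pose proof (closed_reach n P HP0 F a Ha Fa Hcl t b Hb Ht) as Fb.
  specialize (Fb O). simpl in Fb. rewrite Nat.eqb_refl in Fb. lra. Qed.

Lemma escape_prob_bounds : forall a b, (a < n)%nat -> (b < n)%nat -> a <> b ->
  0 < escape_prob n P a b <= 1.
Proof. intros a b Ha Hb Hab.
  assert (Hg : Un_growing (sig_esc a b)).
  { intros k. unfold sig_esc. apply rsum_le; intros. apply Rmult_le_compat_l; auto. apply esc_mono; auto. }
  destruct (mono_cv (sig_esc a b) 1 Hg) as [l Hl]. intros; apply sig_bounds; auto.
  assert (Hlim : escape_prob n P a b = l).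
  { unfold escape_prob, Rlim. apply (UL_sequence (sig_esc a b)); auto.
    apply epsilon_spec. exists l; exact Hl. }
  rewrite Hlim. destruct (sig_pos a b Ha Hb Hab) as [k Hk]. split.
  pose proof (growing_ineq _ _ Hg Hl k). lra.
  apply (Rle_cv_lim (Un := sig_esc a b) (Vn := fun _ => 1)); auto. intros; apply sig_bounds; auto.
  intros e He; exists O; intros; unfold Rdist; rewrite Rminus_diag, Rabs_R0; lra. Qed.

Lemma min_exists : forall (Q : nat -> Prop) (g : nat -> R) N, (exists i, (i < N)%nat /\ Q i) ->
  exists i, (i < N)%nat /\ Q i /\ forall j, (j < N)%nat -> Q j -> g i <= g j.
Proof. intros Q g; induction N; intros [i [Hi Qi]]. lia.
  destruct (classic (exists i, (i < N)%nat /\ Q i)) as [He|Hne].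
  - destruct (IHN He) as [i0 [Hi0 [Qi0 Hm]]].
    destruct (classic (Q N)) as [QN|QN].
    + destruct (Rle_dec (g i0) (g N)).
      * exists i0; repeat split; auto. intros j Hj Qj. destruct (Nat.eq_dec j N). subst; auto. apply Hm; auto; lia.
      * exists N; repeat split; auto. intros j Hj Qj. destruct (Nat.eq_dec j N). subst; lra. specialize (Hm j ltac:(lia) Qj). lra.
    + exists i0; repeat split; auto. intros j Hj Qj. destruct (Nat.eq_dec j N). subst; tauto. apply Hm; auto; lia.
  - exists N. assert (i = N). { destruct (Nat.eq_dec i N); auto. exfalso; apply Hne; exists i; split; auto; lia. }
    subst. repeat split; auto. intros j Hj Qj. destruct (Nat.eq_dec j N). subst; lra. exfalso; apply Hne; exists j; split; auto; lia.
Qed.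

Lemma uP_bounds : 0 < uP n P <= 1.
Proof.
  set (f := escape_prob n P).
  assert (Hex : exists a b, (a < n)%nat /\ (b < n)%nat /\ a <> b /\
      forall a' b', (a' < n)%nat -> (b' < n)%nat -> a' <> b' -> f a b <= f a' b').
  { assert (Hb : forall a, (a < n)%nat -> exists b, (b < n)%nat /\ a <> b /\ forall b', (b' < n)%nat -> a <> b' -> f a b <= f a b').
    { intros a Ha. destruct (min_exists (fun b => a <> b) (f a) n) as [b [Hb [Qb Hm]]].
      destruct (Nat.eq_dec a 0). exists 1%nat; split; [lia|lia]. exists 0%nat; split; lia.
      exists b; repeat split; auto. }
    assert (Hsel : exists g : nat -> nat, forall a, (a < n)%nat -> (g a < n)%nat /\ a <> g a /\ forall b', (b' < n)%nat -> a <> b' -> f a (g a) <= f a b').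
    { exists (fun a => epsilon (inhabits 0%nat) (fun b => (a < n)%nat -> (b < n)%nat /\ a <> b /\ forall b', (b' < n)%nat -> a <> b' -> f a b <= f a b')).
      intros a Ha.
      assert (H := epsilon_spec (inhabits 0%nat) (fun b => (a < n)%nat -> (b < n)%nat /\ a <> b /\ forall b', (b' < n)%nat -> a <> b' -> f a b <= f a b')).
      apply H; auto. destruct (Hb a Ha) as [b Hb']. exists b; intros _; exact Hb'. }
    destruct Hsel as [g Hg].
    destruct (min_exists (fun _ => True) (fun a => f a (g a)) n) as [a [Ha [_ Hm]]]. exists 0%nat; split; [lia|auto].
    destruct (Hg a Ha) as [Hga [Hag Hmin]].
    exists a, (g a); repeat split; auto. intros a' b' Ha' Hb' Hab'.
    apply Rle_trans with (f a' (g a')). apply Hm; auto. apply Hg; auto. }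
  unfold uP. pose proof (epsilon_spec (inhabits 0) (fun u =>
    (exists x y, (x < n)%nat /\ (y < n)%nat /\ x <> y /\ u = escape_prob n P x y) /\
    (forall x y, (x < n)%nat -> (y < n)%nat -> x <> y -> u <= escape_prob n P x y))) as Hs.
  destruct Hs as [[a [b [Ha [Hb [Hab Heq]]]]] _].
  { destruct Hex as [a [b [Ha [Hb [Hab Hm]]]]]. exists (f a b). split; eauto 10. }
  rewrite Heq. apply escape_prob_bounds; auto. Qed.

End Esc.

Lemma cv_shift : forall u l, Un_cv (fun k => u (Datatypes.S k)) l -> Un_cv u l.
Proof. intros u l H e He. destruct (H e He) as [N HN]. exists (Datatypes.S N). intros k Hk.
  destruct k. lia. apply HN. lia. Qed.

Lemma cv_rsum : forall m (F : nat -> nat -> R) (l : nat -> R),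
  (forall y, (y < m)%nat -> Un_cv (fun k => F k y) (l y)) -> Un_cv (fun k => rsum m (F k)) (rsum m l).
Proof. induction m; intros F l H. simpl. intros e He; exists O; intros; unfold Rdist; rewrite Rminus_diag, Rabs_R0; lra.
  simpl. apply CV_plus. apply IHm; intros; apply H; lia. apply H; lia. Qed.

Lemma Rlim_eq : forall u l, Un_cv u l -> Rlim u = l.
Proof. intros. unfold Rlim. apply (UL_sequence u); auto. apply epsilon_spec. eauto. Qed.

Lemma hitk_props : forall n P (HP0 : forall i j, (i < n)%nat -> (j < n)%nat -> 0 <= P i j)
  (HP1 : forall i, (i < n)%nat -> rsum n (fun j => P i j) = 1) A x k z, (z < n)%nat ->
  0 <= hitk n P A x k z <= 1 /\ hitk n P A x k z <= hitk n P A x (Datatypes.S k) z.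
Proof. intros n P HP0 HP1 A x. induction k; intros z Hz.
  - cbn [hitk]. destruct (A z); [destruct (Nat.eqb z x)|]; (split; [lra|]); try lra.
    apply rsum_nonneg; intros. apply Rmult_le_pos; auto. destruct (A i); [destruct (Nat.eqb i x)|]; lra.
  - cbn [hitk] in *. destruct (A z); [destruct (Nat.eqb z x); lra|]. split. split.
    apply rsum_nonneg; intros. apply Rmult_le_pos; auto. apply IHk; auto.
    rewrite <- (HP1 z Hz). apply rsum_le; intros. pose proof (HP0 z i Hz H). destruct (IHk i H) as [[_ Hi] _].
    rewrite <- (Rmult_1_r (P z i)) at 2. apply Rmult_le_compat_l; lra.
    apply rsum_le; intros. apply Rmult_le_compat_l; auto. apply IHk; auto. Qed.

Theorem mainTheorem4 (n : nat) (P : nat -> nat -> R) (pi : nat -> R)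
  (Hn : (2 <= n)%nat)
  (HP : stochastic n P)
  (Hirr : irreducible n P)
  (Hpi : prob_measure n pi)
  (Hrev : reversible n P pi)
  (S : nat -> bool) (x : nat) (Hx : (x < n)%nat) (HxS : S x = true) :
  harm n P pi S x <= / uP n P * pi x * exp_ret n P S x.
Proof.
  destruct HP as [HP0 HP1]. destruct Hpi as [Hpi0 _].
  destruct (D_geom n P HP0 HP1 S x Hx HxS Hirr Hn) as [m [rho [Hm [Hrho Hgeom]]]].
  set (d := fun t => D n P S t x).
  assert (Hd0 : forall t, 0 <= d t) by (intros; apply (D_bounds n P HP0 HP1 S t x Hx)).
  assert (Hdd : forall t, d (Datatypes.S t) <= d t) by (intros; apply (D_decr n P HP0 HP1 S t x Hx)).
  assert (HdK : forall K, d (K * m)%nat <= rho ^ K) by (intros; apply Hgeom; auto).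
  assert (HTg : forall k, rsum k d <= rsum (Datatypes.S k) d) by (intros; simpl; pose proof (Hd0 k); lra).
  destruct (mono_cv (fun N => rsum N d) (INR m / (1 - rho)) HTg) as [L HL].
  { intros; apply block_bound; auto. }
  pose proof (ND_to_0 d L Hd0 Hdd HL) as HND.
  assert (HL0 : 0 <= L). { pose proof (growing_ineq _ _ HTg HL 0). simpl in H. lra. }
  assert (HE : exp_ret n P S x = L).
  { unfold exp_ret. apply Rlim_eq. apply cv_shift.
    pose proof (CV_minus _ _ L 0 HL HND) as H. rewrite Rminus_0_r in H.
    intros e He. destruct (H e He) as [N HN]. exists N. intros k Hk.
    rewrite (exp_partial n P HP1 S x Hx k). apply HN; auto. }
  assert (Hcst : forall c, Un_cv (fun _ : nat => c) c).
  { intros c e He; exists O; intros; unfold Rdist; rewrite Rminus_diag, Rabs_R0; lra. }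
  assert (HH : harm n P pi S x = pi x * L).
  { assert (Hy : forall y, (y < n)%nat -> exists h, Un_cv (fun k => hitk n P S x k y) h).
    { intros. apply (mono_cv _ 1). intros; apply hitk_props; auto. intros; apply hitk_props; auto. }
    set (hl := fun y => harm_from n P S y x).
    assert (Hcv : forall y, (y < n)%nat -> Un_cv (fun k => hitk n P S x k y) (hl y)).
    { intros. destruct (Hy y H) as [h Hh]. unfold hl, harm_from. rewrite (Rlim_eq _ h Hh). auto. }
    assert (H1 : Un_cv (fun k => rsum n (fun y => pi y * hitk n P S x k y)) (rsum n (fun y => pi y * hl y))).
    { apply (cv_rsum n (fun k y => pi y * hitk n P S x k y) (fun y => pi y * hl y)). intros.
      apply (CV_mult (fun _ => pi y)); auto. }
    assert (H2 : Un_cv (fun k => rsum n (fun y => pi y * hitk n P S x k y)) (pi x * L)).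
    { intros e He. destruct (CV_mult (fun _ => pi x) _ _ _ (Hcst (pi x)) HL e He) as [N HN]. exists N. intros k Hk.
      rewrite (rsum_ext _ _ (fun y => pi y * 1 * hitk n P S x k y)) by (intros; ring).
      rewrite (reversal n P S pi Hrev x Hx HxS k (fun _ => 1)).
      exact (HN (Datatypes.S k) ltac:(lia)). }
    exact (UL_sequence _ _ _ H1 H2). }
  rewrite HH, HE. destruct (uP_bounds n P HP0 HP1 Hirr Hn) as [Hu1 Hu2].
  pose proof (Rinv_le_contravar _ _ Hu1 Hu2). rewrite Rinv_1 in H.
  pose proof (Hpi0 x Hx). pose proof (Rmult_le_pos _ _ H0 HL0).
  replace (/ uP n P * pi x * L) with (/ uP n P * (pi x * L)) by ring. nra.
Qed.
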